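(* Let $\mathbf{x}=(x_s)\in(\mathbb{R}_{>0})^{\mathbb{Z}^3}$ satisfy the positive Kashaev recurrence: for every $v\in\mathbb{Z}^3$, writing $z_{ijk}=x_{v+(i,j,k)}$ for $i,j,k\in\{0,1\}$, $$z_{111}=\frac{A+2\sqrt{D}}{z_{000}^2},$$ where $A=2z_{100}z_{010}z_{001}+z_{000}(z_{100}z_{011}+z_{010}z_{101}+z_{001}z_{110})$, $D=(z_{000}z_{011}+z_{010}z_{001})(z_{000}z_{101}+z_{100}z_{001})(z_{000}z_{110}+z_{100}z_{010})$, and $\sqrt{D}$ is the positive square root. Then for every $v\in\mathbb{Z}^3$, $$\prod_{C\ni v}K^C_v(\mathbf{x})=\prod_{S\ni v}(x_vx_{v_2}+x_{v_1}x_{v_3}),$$ where the first product is over the $8$ unit cubes $C$ in $\mathbb{Z}^3$ containing $v$, and the second is over the $12$ unit squares $S$ containing $v$, with $v,v_1,v_2,v_3$ the vertices of $S$ in cyclic order.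
   Context: For a unit cube $C$ in $\mathbb{Z}^3$ with vertex $v$ and $\mathbf{x}\in\mathbb{C}^{\mathbb{Z}^3}$, label the values of $\mathbf{x}$ at the vertices of $C$ as $z_{ijk}$, $i,j,k\in\{0,1\}$, via an identification of $C$ with $\{0,1\}^3$ (a cube isomorphism) sending $v$ to $000$, and set $K^C_v(\mathbf{x})=\tfrac12\big(z_{111}z_{000}^2-z_{000}(z_{100}z_{011}+z_{010}z_{101}+z_{001}z_{110})\big)-z_{100}z_{010}z_{001}$ (independent of the choice of identification). *)

(* Defs.v *)
From HB Require Import structures.
From mathcomp Require Import all_boot all_order all_algebra.
From mathcomp Require Import reals.
Set Implicit Arguments. Unset Strict Implicit. Unset Printing Implicit Defensive.
Import Order.TTheory GRing.Theory Num.Theory.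
Local Open Scope ring_scope.

Definition Z3 := (int * int * int)%type.

Definition shift (v : Z3) (a b c : int) : Z3 :=
  (v.1.1 + a, v.1.2 + b, v.2 + c).

Definition sg (b : bool) : int := if b then -1 else 1.

Section Kashaev.
Variable R : realType.

Definition kashaev_at (x : Z3 -> R) (v : Z3) : Prop :=
  let z := fun i j k : int => x (shift v i j k) in
  let A := 2 * z 1 0 0 * z 0 1 0 * z 0 0 1
           + z 0 0 0 * (z 1 0 0 * z 0 1 1 + z 0 1 0 * z 1 0 1 + z 0 0 1 * z 1 1 0) in
  let D := (z 0 0 0 * z 0 1 1 + z 0 1 0 * z 0 0 1)
         * (z 0 0 0 * z 1 0 1 + z 1 0 0 * z 0 0 1)
         * (z 0 0 0 * z 1 1 0 + z 1 0 0 * z 0 1 0) in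
  z 1 1 1 = (A + 2 * Num.sqrt D) / (z 0 0 0 ^+ 2).

(* K^C_v for the unit cube C containing v that lies in the octant
   v + (s1 * [0,1]) x (s2 * [0,1]) x (s3 * [0,1]) with signs sg s1, sg s2, sg s3;
   the cube isomorphism C ~ {0,1}^3 sending v to 000 is
   (i,j,k) |-> v + (sg s1 * i, sg s2 * j, sg s3 * k). *)
Definition Kcube (x : Z3 -> R) (v : Z3) (s1 s2 s3 : bool) : R :=
  let z := fun i j k : int => x (shift v (sg s1 * i) (sg s2 * j) (sg s3 * k)) in
  2^-1 * (z 1 1 1 * z 0 0 0 ^+ 2
          - z 0 0 0 * (z 1 0 0 * z 0 1 1 + z 0 1 0 * z 1 0 1 + z 0 0 1 * z 1 1 0))
  - z 1 0 0 * z 0 1 0 * z 0 0 1.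

(* For the unit square with vertices, in cyclic order,
   v, v1 = v + d1, v2 = v + d1 + d2, v3 = v + d2:  x_v x_v2 + x_v1 x_v3. *)
Definition sqterm (x : Z3 -> R) (v : Z3) (d1 d2 : Z3) : R :=
  x v * x (shift v (d1.1.1 + d2.1.1) (d1.1.2 + d2.1.2) (d1.2 + d2.2))
  + x (shift v d1.1.1 d1.1.2 d1.2) * x (shift v d2.1.1 d2.1.2 d2.2).

Definition cube_prod (x : Z3 -> R) (v : Z3) : R :=
  \prod_(s1 : bool) \prod_(s2 : bool) \prod_(s3 : bool) Kcube x v s1 s2 s3.

(* Product over the 12 unit squares containing v
   (4 in each of the three coordinate planes through v). *)
Definition square_prod (x : Z3 -> R) (v : Z3) : R :=
  \prod_(s1 : bool) \prod_(s2 : bool)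
     (sqterm x v (sg s1, 0, 0) (0, sg s2, 0)
    * sqterm x v (sg s1, 0, 0) (0, 0, sg s2)
    * sqterm x v (0, sg s1, 0) (0, 0, sg s2)).

End Kashaev.

(* Main.v *)
Require Import Defs.
From HB Require Import structures.
From mathcomp Require Import all_boot all_order all_algebra.
From mathcomp Require Import reals.
From mathcomp Require Import ring lra.
Import Order.TTheory GRing.Theory Num.Theory.
Local Open Scope ring_scope.
Section Core.
Variable R : realType.
Ltac pos := repeat (first [ assumption | apply: addr_ge0 | apply: mulr_ge0 | apply: divr_ge0 | apply: exprn_ge0 | rewrite invr_ge0 | apply: ltW | apply: ler0n ]).
Ltac spos := repeat (first [ assumption | apply: addr_gt0 | apply: mulr_gt0 | apply: divr_gt0 | apply: exprn_gt0 | rewrite invr_gt0 | apply: ltr0n ]).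
Ltac nz := repeat (apply/andP; split); apply: lt0r_neq0; spos.

Lemma core000 (y000 y001 y010 y011 y100 y101 y110 y111 : R) :
  0 < y000 -> 0 < y001 -> 0 < y010 -> 0 < y011 -> 0 < y100 -> 0 < y101 -> 0 < y110 -> 0 < y111 ->
  y111 = (2 * y100 * y010 * y001 + y000 * (y100 * y011 + y010 * y101 + y001 * y110) + 2 * Num.sqrt ((y000 * y011 + y010 * y001) * (y000 * y101 + y100 * y001) * (y000 * y110 + y100 * y010))) / (y000 ^+ 2) ->
  2^-1 * (y111 * y000 ^+ 2 - y000 * (y100 * y011 + y010 * y101 + y001 * y110)) - y100 * y010 * y001 = 1 * Num.sqrt ((y000 * y110 + y100 * y010) * (y000 * y101 + y100 * y001) * (y000 * y011 + y010 * y001)).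
Proof.
move=> p000 p001 p010 p011 p100 p101 p110 p111 hk.
have [s hsdef] : exists s, s = Num.sqrt ((y000 * y011 + y010 * y001) * (y000 * y101 + y100 * y001) * (y000 * y110 + y100 * y010)) by eexists.
rewrite -hsdef in hk.
have hs0 : 0 <= s by rewrite hsdef; exact: sqrtr_ge0.
have hs : s ^+ 2 = ((y000 * y011 + y010 * y001) * (y000 * y101 + y100 * y001) * (y000 * y110 + y100 * y010)) by rewrite hsdef sqr_sqrtr //; pos.
clear hsdef.
have hT : 0 <= s by pos.
have he : y011 = ((s ^+ 2 / ((y000 * y101 + y100 * y001) * (y000 * y110 + y100 * y010)) - y010 * y001) / y000).
  by rewrite hs; field; nz.
have -> : (y000 * y110 + y100 * y010) * (y000 * y101 + y100 * y001) * (y000 * y011 + y010 * y001) = s ^+ 2.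
  by rewrite ?hk ?he; field; nz.
rewrite sqrtr_sqr ger0_norm //.
by rewrite ?hk ?he; field; nz.
Qed.

Lemma core001 (y000 y001 y010 y011 y100 y101 y110 y111 : R) :
  0 < y000 -> 0 < y001 -> 0 < y010 -> 0 < y011 -> 0 < y100 -> 0 < y101 -> 0 < y110 -> 0 < y111 ->
  y110 = (2 * y101 * y011 * y000 + y001 * (y101 * y010 + y011 * y100 + y000 * y111) + 2 * Num.sqrt ((y001 * y010 + y011 * y000) * (y001 * y100 + y101 * y000) * (y001 * y111 + y101 * y011))) / (y001 ^+ 2) ->
  2^-1 * (y111 * y000 ^+ 2 - y000 * (y100 * y011 + y010 * y101 + y001 * y110)) - y100 * y010 * y001 = -1 * Num.sqrt ((y000 * y110 + y100 * y010) * (y000 * y101 + y100 * y001) * (y000 * y011 + y010 * y001)).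
Proof.
move=> p000 p001 p010 p011 p100 p101 p110 p111 hk.
have [s hsdef] : exists s, s = Num.sqrt ((y001 * y010 + y011 * y000) * (y001 * y100 + y101 * y000) * (y001 * y111 + y101 * y011)) by eexists.
rewrite -hsdef in hk.
have hs0 : 0 <= s by rewrite hsdef; exact: sqrtr_ge0.
have hs : s ^+ 2 = ((y001 * y010 + y011 * y000) * (y001 * y100 + y101 * y000) * (y001 * y111 + y101 * y011)) by rewrite hsdef sqr_sqrtr //; pos.
clear hsdef.
have hT : 0 <= (((y011*y000+y001*y010)*(y101*y000+y001*y100)+y000*s) / y001 ^+ 1) by pos.
have he : y010 = ((s ^+ 2 / ((y001 * y100 + y101 * y000) * (y001 * y111 + y101 * y011)) - y011 * y000) / y001).
  by rewrite hs; field; nz.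
have -> : (y000 * y110 + y100 * y010) * (y000 * y101 + y100 * y001) * (y000 * y011 + y010 * y001) = (((y011*y000+y001*y010)*(y101*y000+y001*y100)+y000*s) / y001 ^+ 1) ^+ 2.
  by rewrite ?hk ?he; field; nz.
rewrite sqrtr_sqr ger0_norm //.
by rewrite ?hk ?he; field; nz.
Qed.

Lemma core010 (y000 y001 y010 y011 y100 y101 y110 y111 : R) :
  0 < y000 -> 0 < y001 -> 0 < y010 -> 0 < y011 -> 0 < y100 -> 0 < y101 -> 0 < y110 -> 0 < y111 ->
  y101 = (2 * y110 * y000 * y011 + y010 * (y110 * y001 + y000 * y111 + y011 * y100) + 2 * Num.sqrt ((y010 * y001 + y000 * y011) * (y010 * y111 + y110 * y011) * (y010 * y100 + y110 * y000))) / (y010 ^+ 2) ->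
  2^-1 * (y111 * y000 ^+ 2 - y000 * (y100 * y011 + y010 * y101 + y001 * y110)) - y100 * y010 * y001 = -1 * Num.sqrt ((y000 * y110 + y100 * y010) * (y000 * y101 + y100 * y001) * (y000 * y011 + y010 * y001)).
Proof.
move=> p000 p001 p010 p011 p100 p101 p110 p111 hk.
have [s hsdef] : exists s, s = Num.sqrt ((y010 * y001 + y000 * y011) * (y010 * y111 + y110 * y011) * (y010 * y100 + y110 * y000)) by eexists.
rewrite -hsdef in hk.
have hs0 : 0 <= s by rewrite hsdef; exact: sqrtr_ge0.
have hs : s ^+ 2 = ((y010 * y001 + y000 * y011) * (y010 * y111 + y110 * y011) * (y010 * y100 + y110 * y000)) by rewrite hsdef sqr_sqrtr //; pos.
clear hsdef.
have hT : 0 <= (((y000*y110+y010*y100)*(y000*y011+y010*y001)+y000*s) / y010 ^+ 1) by pos.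
have he : y001 = ((s ^+ 2 / ((y010 * y111 + y110 * y011) * (y010 * y100 + y110 * y000)) - y000 * y011) / y010).
  by rewrite hs; field; nz.
have -> : (y000 * y110 + y100 * y010) * (y000 * y101 + y100 * y001) * (y000 * y011 + y010 * y001) = (((y000*y110+y010*y100)*(y000*y011+y010*y001)+y000*s) / y010 ^+ 1) ^+ 2.
  by rewrite ?hk ?he; field; nz.
rewrite sqrtr_sqr ger0_norm //.
by rewrite ?hk ?he; field; nz.
Qed.

Lemma core011 (y000 y001 y010 y011 y100 y101 y110 y111 : R) :
  0 < y000 -> 0 < y001 -> 0 < y010 -> 0 < y011 -> 0 < y100 -> 0 < y101 -> 0 < y110 -> 0 < y111 ->
  y100 = (2 * y111 * y001 * y010 + y011 * (y111 * y000 + y001 * y110 + y010 * y101) + 2 * Num.sqrt ((y011 * y000 + y001 * y010) * (y011 * y110 + y111 * y010) * (y011 * y101 + y111 * y001))) / (y011 ^+ 2) ->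
  2^-1 * (y111 * y000 ^+ 2 - y000 * (y100 * y011 + y010 * y101 + y001 * y110)) - y100 * y010 * y001 = -1 * Num.sqrt ((y000 * y110 + y100 * y010) * (y000 * y101 + y100 * y001) * (y000 * y011 + y010 * y001)).
Proof.
move=> p000 p001 p010 p011 p100 p101 p110 p111 hk.
have [s hsdef] : exists s, s = Num.sqrt ((y011 * y000 + y001 * y010) * (y011 * y110 + y111 * y010) * (y011 * y101 + y111 * y001)) by eexists.
rewrite -hsdef in hk.
have hs0 : 0 <= s by rewrite hsdef; exact: sqrtr_ge0.
have hs : s ^+ 2 = ((y011 * y000 + y001 * y010) * (y011 * y110 + y111 * y010) * (y011 * y101 + y111 * y001)) by rewrite hsdef sqr_sqrtr //; pos.
clear hsdef.
have hT : 0 <= (((y011*y000+y001*y010)*(y011*(y010*y101+y001*y110)+2*y111*y001*y010)+(y011*y000+2*y001*y010)*s) / y011 ^+ 2) by pos.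
have he : y000 = ((s ^+ 2 / ((y011 * y110 + y111 * y010) * (y011 * y101 + y111 * y001)) - y001 * y010) / y011).
  by rewrite hs; field; nz.
have -> : (y000 * y110 + y100 * y010) * (y000 * y101 + y100 * y001) * (y000 * y011 + y010 * y001) = (((y011*y000+y001*y010)*(y011*(y010*y101+y001*y110)+2*y111*y001*y010)+(y011*y000+2*y001*y010)*s) / y011 ^+ 2) ^+ 2.
  by rewrite ?hk ?he; field; nz.
rewrite sqrtr_sqr ger0_norm //.
by rewrite ?hk ?he; field; nz.
Qed.

Lemma core100 (y000 y001 y010 y011 y100 y101 y110 y111 : R) :
  0 < y000 -> 0 < y001 -> 0 < y010 -> 0 < y011 -> 0 < y100 -> 0 < y101 -> 0 < y110 -> 0 < y111 ->
  y011 = (2 * y000 * y110 * y101 + y100 * (y000 * y111 + y110 * y001 + y101 * y010) + 2 * Num.sqrt ((y100 * y111 + y110 * y101) * (y100 * y001 + y000 * y101) * (y100 * y010 + y000 * y110))) / (y100 ^+ 2) ->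
  2^-1 * (y111 * y000 ^+ 2 - y000 * (y100 * y011 + y010 * y101 + y001 * y110)) - y100 * y010 * y001 = -1 * Num.sqrt ((y000 * y110 + y100 * y010) * (y000 * y101 + y100 * y001) * (y000 * y011 + y010 * y001)).
Proof.
move=> p000 p001 p010 p011 p100 p101 p110 p111 hk.
have [s hsdef] : exists s, s = Num.sqrt ((y100 * y111 + y110 * y101) * (y100 * y001 + y000 * y101) * (y100 * y010 + y000 * y110)) by eexists.
rewrite -hsdef in hk.
have hs0 : 0 <= s by rewrite hsdef; exact: sqrtr_ge0.
have hs : s ^+ 2 = ((y100 * y111 + y110 * y101) * (y100 * y001 + y000 * y101) * (y100 * y010 + y000 * y110)) by rewrite hsdef sqr_sqrtr //; pos.
clear hsdef.
have hT : 0 <= (((y000*y110+y100*y010)*(y000*y101+y100*y001)+y000*s) / y100 ^+ 1) by pos.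
have he : y111 = ((s ^+ 2 / ((y100 * y001 + y000 * y101) * (y100 * y010 + y000 * y110)) - y110 * y101) / y100).
  by rewrite hs; field; nz.
have -> : (y000 * y110 + y100 * y010) * (y000 * y101 + y100 * y001) * (y000 * y011 + y010 * y001) = (((y000*y110+y100*y010)*(y000*y101+y100*y001)+y000*s) / y100 ^+ 1) ^+ 2.
  by rewrite ?hk ?he; field; nz.
rewrite sqrtr_sqr ger0_norm //.
by rewrite ?hk ?he; field; nz.
Qed.

Lemma core101 (y000 y001 y010 y011 y100 y101 y110 y111 : R) :
  0 < y000 -> 0 < y001 -> 0 < y010 -> 0 < y011 -> 0 < y100 -> 0 < y101 -> 0 < y110 -> 0 < y111 ->
  y010 = (2 * y001 * y111 * y100 + y101 * (y001 * y110 + y111 * y000 + y100 * y011) + 2 * Num.sqrt ((y101 * y110 + y111 * y100) * (y101 * y000 + y001 * y100) * (y101 * y011 + y001 * y111))) / (y101 ^+ 2) ->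
  2^-1 * (y111 * y000 ^+ 2 - y000 * (y100 * y011 + y010 * y101 + y001 * y110)) - y100 * y010 * y001 = -1 * Num.sqrt ((y000 * y110 + y100 * y010) * (y000 * y101 + y100 * y001) * (y000 * y011 + y010 * y001)).
Proof.
move=> p000 p001 p010 p011 p100 p101 p110 p111 hk.
have [s hsdef] : exists s, s = Num.sqrt ((y101 * y110 + y111 * y100) * (y101 * y000 + y001 * y100) * (y101 * y011 + y001 * y111)) by eexists.
rewrite -hsdef in hk.
have hs0 : 0 <= s by rewrite hsdef; exact: sqrtr_ge0.
have hs : s ^+ 2 = ((y101 * y110 + y111 * y100) * (y101 * y000 + y001 * y100) * (y101 * y011 + y001 * y111)) by rewrite hsdef sqr_sqrtr //; pos.
clear hsdef.
have hT : 0 <= (((y101*y000+y001*y100)*(y101*(y001*y110+y100*y011)+2*y001*y111*y100)+(y101*y000+2*y001*y100)*s) / y101 ^+ 2) by pos.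
have he : y110 = ((s ^+ 2 / ((y101 * y000 + y001 * y100) * (y101 * y011 + y001 * y111)) - y111 * y100) / y101).
  by rewrite hs; field; nz.
have -> : (y000 * y110 + y100 * y010) * (y000 * y101 + y100 * y001) * (y000 * y011 + y010 * y001) = (((y101*y000+y001*y100)*(y101*(y001*y110+y100*y011)+2*y001*y111*y100)+(y101*y000+2*y001*y100)*s) / y101 ^+ 2) ^+ 2.
  by rewrite ?hk ?he; field; nz.
rewrite sqrtr_sqr ger0_norm //.
by rewrite ?hk ?he; field; nz.
Qed.

Lemma core110 (y000 y001 y010 y011 y100 y101 y110 y111 : R) :
  0 < y000 -> 0 < y001 -> 0 < y010 -> 0 < y011 -> 0 < y100 -> 0 < y101 -> 0 < y110 -> 0 < y111 ->
  y001 = (2 * y010 * y100 * y111 + y110 * (y010 * y101 + y100 * y011 + y111 * y000) + 2 * Num.sqrt ((y110 * y101 + y100 * y111) * (y110 * y011 + y010 * y111) * (y110 * y000 + y010 * y100))) / (y110 ^+ 2) ->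
  2^-1 * (y111 * y000 ^+ 2 - y000 * (y100 * y011 + y010 * y101 + y001 * y110)) - y100 * y010 * y001 = -1 * Num.sqrt ((y000 * y110 + y100 * y010) * (y000 * y101 + y100 * y001) * (y000 * y011 + y010 * y001)).
Proof.
move=> p000 p001 p010 p011 p100 p101 p110 p111 hk.
have [s hsdef] : exists s, s = Num.sqrt ((y110 * y101 + y100 * y111) * (y110 * y011 + y010 * y111) * (y110 * y000 + y010 * y100)) by eexists.
rewrite -hsdef in hk.
have hs0 : 0 <= s by rewrite hsdef; exact: sqrtr_ge0.
have hs : s ^+ 2 = ((y110 * y101 + y100 * y111) * (y110 * y011 + y010 * y111) * (y110 * y000 + y010 * y100)) by rewrite hsdef sqr_sqrtr //; pos.
clear hsdef.
have hT : 0 <= (((y110*y000+y010*y100)*(y110*(y010*y101+y100*y011)+2*y010*y100*y111)+(y110*y000+2*y010*y100)*s) / y110 ^+ 2) by pos.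
have he : y101 = ((s ^+ 2 / ((y110 * y011 + y010 * y111) * (y110 * y000 + y010 * y100)) - y100 * y111) / y110).
  by rewrite hs; field; nz.
have -> : (y000 * y110 + y100 * y010) * (y000 * y101 + y100 * y001) * (y000 * y011 + y010 * y001) = (((y110*y000+y010*y100)*(y110*(y010*y101+y100*y011)+2*y010*y100*y111)+(y110*y000+2*y010*y100)*s) / y110 ^+ 2) ^+ 2.
  by rewrite ?hk ?he; field; nz.
rewrite sqrtr_sqr ger0_norm //.
by rewrite ?hk ?he; field; nz.
Qed.

Lemma core111 (y000 y001 y010 y011 y100 y101 y110 y111 : R) :
  0 < y000 -> 0 < y001 -> 0 < y010 -> 0 < y011 -> 0 < y100 -> 0 < y101 -> 0 < y110 -> 0 < y111 ->
  y000 = (2 * y011 * y101 * y110 + y111 * (y011 * y100 + y101 * y010 + y110 * y001) + 2 * Num.sqrt ((y111 * y100 + y101 * y110) * (y111 * y010 + y011 * y110) * (y111 * y001 + y011 * y101))) / (y111 ^+ 2) ->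
  2^-1 * (y111 * y000 ^+ 2 - y000 * (y100 * y011 + y010 * y101 + y001 * y110)) - y100 * y010 * y001 = 1 * Num.sqrt ((y000 * y110 + y100 * y010) * (y000 * y101 + y100 * y001) * (y000 * y011 + y010 * y001)).
Proof.
move=> p000 p001 p010 p011 p100 p101 p110 p111 hk.
have [s hsdef] : exists s, s = Num.sqrt ((y111 * y100 + y101 * y110) * (y111 * y010 + y011 * y110) * (y111 * y001 + y011 * y101)) by eexists.
rewrite -hsdef in hk.
have hs0 : 0 <= s by rewrite hsdef; exact: sqrtr_ge0.
have hs : s ^+ 2 = ((y111 * y100 + y101 * y110) * (y111 * y010 + y011 * y110) * (y111 * y001 + y011 * y101)) by rewrite hsdef sqr_sqrtr //; pos.
clear hsdef.
have hT : 0 <= ((4*y011^+2*y101^+2*y110^+2+3*y111*y011*y101*y110*(y110*y001+y101*y010+y011*y100)+2*y111^+2*(y101*y110*y010*y001+y011*y110*y100*y001+y011*y101*y100*y010)+y111^+3*y100*y010*y001+(4*y011*y101*y110+y111*(y110*y001+y101*y010+y011*y100))*s) / y111 ^+ 3) by pos.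
have he : y100 = ((s ^+ 2 / ((y111 * y010 + y011 * y110) * (y111 * y001 + y011 * y101)) - y101 * y110) / y111).
  by rewrite hs; field; nz.
have -> : (y000 * y110 + y100 * y010) * (y000 * y101 + y100 * y001) * (y000 * y011 + y010 * y001) = ((4*y011^+2*y101^+2*y110^+2+3*y111*y011*y101*y110*(y110*y001+y101*y010+y011*y100)+2*y111^+2*(y101*y110*y010*y001+y011*y110*y100*y001+y011*y101*y100*y010)+y111^+3*y100*y010*y001+(4*y011*y101*y110+y111*(y110*y001+y101*y010+y011*y100))*s) / y111 ^+ 3) ^+ 2.
  by rewrite ?hk ?he; field; nz.
rewrite sqrtr_sqr ger0_norm //.
by rewrite ?hk ?he; field; nz.
Qed.


Lemma key3 (p q r : R) : 0 <= p -> 0 <= q -> 0 <= r ->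
  Num.sqrt (p ^+ 2 * q ^+ 2 * r ^+ 2) = p * q * r.
Proof.
move=> hp hq hr; rewrite -!exprMn sqrtr_sqr ger0_norm //.
by rewrite !mulr_ge0.
Qed.

Lemma assemble (F G H : bool -> bool -> R) :
  (forall a b, 0 <= F a b) -> (forall a b, 0 <= G a b) -> (forall a b, 0 <= H a b) ->
  \prod_(s1 : bool) \prod_(s2 : bool) \prod_(s3 : bool)
     ((if (s1 == s2) && (s2 == s3) then 1 else -1) * Num.sqrt (F s1 s2 * G s1 s3 * H s2 s3))
  = \prod_(s1 : bool) \prod_(s2 : bool) (F s1 s2 * G s1 s2 * H s1 s2).
Proof.
move=> hF hG hH.
have e : forall (K : bool -> bool -> R), (forall a b, 0 <= K a b) -> forall a b, K a b = Num.sqrt (K a b) ^+ 2.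
  by move=> K hK a b; rewrite sqr_sqrtr.
transitivity (\prod_(s1 : bool) \prod_(s2 : bool) \prod_(s3 : bool)
     ((if (s1 == s2) && (s2 == s3) then 1 else -1) *
      Num.sqrt (Num.sqrt (F s1 s2) ^+ 2 * Num.sqrt (G s1 s3) ^+ 2 * Num.sqrt (H s2 s3) ^+ 2))).
  apply: eq_bigr => a _; apply: eq_bigr => b _; apply: eq_bigr => c _.
  by rewrite !sqr_sqrtr.
transitivity (\prod_(s1 : bool) \prod_(s2 : bool)
   (Num.sqrt (F s1 s2) ^+ 2 * Num.sqrt (G s1 s2) ^+ 2 * Num.sqrt (H s1 s2) ^+ 2)); last first.
  by apply: eq_bigr => a _; apply: eq_bigr => b _; rewrite !sqr_sqrtr.
rewrite !big_bool /= !key3 ?sqrtr_ge0 //.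
ring.
Qed.

End Core.

Arguments shift : simpl never.

Lemma shift0 (v : Z3) : shift v 0 0 0 = v.
Proof. by case: v => [[a b] c]; rewrite /shift /= !addr0. Qed.

Lemma shiftS (v : Z3) a b c i j k : shift (shift v a b c) i j k = shift v (a + i) (b + j) (c + k).
Proof. by rewrite /shift /= !addrA. Qed.

Ltac normz := rewrite ?shiftS ?mulr1 ?mulr0 ?addr0 ?add0r ?addNr ?shift0.

Ltac tryb hpos hrec v o1 o2 o3 :=
  let hk := fresh "hk" in
  have hk := hrec (shift v o1 o2 o3); rewrite /kashaev_at in hk; cbv beta zeta in hk;
  move: hk; normz => hk;
  first [ (apply: core000; try exact: hpos; exact: hk) | (apply: core001; try exact: hpos; exact: hk) | (apply: core010; try exact: hpos; exact: hk) | (apply: core011; try exact: hpos; exact: hk) | (apply: core100; try exact: hpos; exact: hk) | (apply: core101; try exact: hpos; exact: hk) | (apply: core110; try exact: hpos; exact: hk) | (apply: core111; try exact: hpos; exact: hk) ].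

Lemma Kcube_eq (R : realType) (x : Z3 -> R) (hpos : forall s : Z3, 0 < x s)
  (hrec : forall v : Z3, kashaev_at x v) (v : Z3) (s1 s2 s3 : bool) :
  Kcube x v s1 s2 s3 = (if (s1 == s2) && (s2 == s3) then 1 else -1) *
    Num.sqrt (sqterm x v (sg s1, 0, 0) (0, sg s2, 0) * sqterm x v (sg s1, 0, 0) (0, 0, sg s3)
              * sqterm x v (0, sg s2, 0) (0, 0, sg s3)).
Proof.
case: s1; case: s2; case: s3; rewrite /Kcube /sqterm /=; normz.
all: first [ tryb hpos hrec v constr:((0:int)) constr:((0:int)) constr:((0:int)) | tryb hpos hrec v constr:((0:int)) constr:((0:int)) constr:((-1:int)) | tryb hpos hrec v constr:((0:int)) constr:((-1:int)) constr:((0:int)) | tryb hpos hrec v constr:((0:int)) constr:((-1:int)) constr:((-1:int)) | tryb hpos hrec v constr:((-1:int)) constr:((0:int)) constr:((0:int)) | tryb hpos hrec v constr:((-1:int)) constr:((0:int)) constr:((-1:int)) | tryb hpos hrec v constr:((-1:int)) constr:((-1:int)) constr:((0:int)) | tryb hpos hrec v constr:((-1:int)) constr:((-1:int)) constr:((-1:int)) ].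
Qed.

Theorem theorem2p9 (R : realType) (x : Z3 -> R)
  (hpos : forall s : Z3, 0 < x s)
  (hrec : forall v : Z3, kashaev_at x v) :
  forall v : Z3, cube_prod x v = square_prod x v.
Proof.
move=> v.
have sq0 : forall d1 d2, 0 <= sqterm x v d1 d2.
  by move=> d1 d2; rewrite /sqterm; apply: addr_ge0; apply: mulr_ge0; apply: ltW.
transitivity (\prod_(s1 : bool) \prod_(s2 : bool) \prod_(s3 : bool)
   ((if (s1 == s2) && (s2 == s3) then 1 else -1) *
    Num.sqrt (sqterm x v (sg s1, 0, 0) (0, sg s2, 0) * sqterm x v (sg s1, 0, 0) (0, 0, sg s3)
              * sqterm x v (0, sg s2, 0) (0, 0, sg s3)))).
  apply: eq_bigr => a _; apply: eq_bigr => b _; apply: eq_bigr => c _.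
  exact: Kcube_eq.
rewrite (@assemble R (fun a b => sqterm x v (sg a, 0, 0) (0, sg b, 0))
                  (fun a b => sqterm x v (sg a, 0, 0) (0, 0, sg b))
                  (fun a b => sqterm x v (0, sg a, 0) (0, 0, sg b))) //.
Qed.
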